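(* Let $t>0$ and $u\ge 0$. For any $\phi\in C([0,t+u];\mathbb{R})$, \[ \mathcal{T}^t\bigl(\mathcal{T}^{t+u}(\phi)\bigr)(s)=\mathbb{T}^t_{\phi_t+\mathcal{T}^{t+u}(\phi)(t)}(\phi)(s),\qquad 0\le s\le t, \] where on both sides the transformations of duration $t$ act on the restrictions to $[0,t]$ of the paths.
   Context: For $r>0$ and $\psi\in C([0,r];\mathbb{R})$ let $A_s(\psi)=\int_0^s e^{2\psi_v}\,dv$. For $z\in\mathbb{R}$, $\mathbb{T}^r_z(\psi)(s)=\psi_s-\log\{1+\frac{A_s(\psi)}{A_r(\psi)}(e^z-1)\}$, $0\le s\le r$, and $\mathcal{T}^r(\psi)(s)=\mathbb{T}^r_{2\psi_r}(\psi)(s)$, $0\le s\le r$. *)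

(* Defs.v *)
From Stdlib Require Import Reals.
From Coquelicot Require Import Coquelicot.
Open Scope R_scope.

(* A path psi in C([0,r];R) is represented by a function R -> R; only its
   values on [0,r] are used by the definitions below. *)

Definition cont_on (a b : R) (psi : R -> R) : Prop :=
  forall x, a <= x <= b ->
    filterlim psi (within (fun y => a <= y <= b) (locally x)) (locally (psi x)).

Definition A_ (psi : R -> R) (s : R) : R :=
  RInt (fun v => exp (2 * psi v)) 0 s.

Definition TT (r z : R) (psi : R -> R) (s : R) : R :=
  psi s - ln (1 + A_ psi s / A_ psi r * (exp z - 1)).

Definition calT (r : R) (psi : R -> R) (s : R) : R :=
  TT r (2 * psi r) psi s.

(* Main.v *)
Require Import Defs.
From Stdlib Require Import Reals Lra.
From Coquelicot Require Import Coquelicot.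
Open Scope R_scope.

Definition clamp (T x : R) := Rmax 0 (Rmin x T).

Lemma clamp_in T x : 0 <= T -> 0 <= clamp T x <= T.
Proof. intros; unfold clamp, Rmax, Rmin; repeat destruct Rle_dec; lra. Qed.

Lemma clamp_id T x : 0 <= x <= T -> clamp T x = x.
Proof. intros; unfold clamp, Rmax, Rmin; repeat destruct Rle_dec; lra. Qed.

Lemma clamp_lip T x y : 0 <= T -> Rabs (clamp T y - clamp T x) <= Rabs (y - x).
Proof.
  intros; unfold clamp, Rmax, Rmin; repeat destruct Rle_dec;
  unfold Rabs; repeat destruct Rcase_abs; lra.
Qed.

Lemma clamp_cont T phi x : 0 <= T -> cont_on 0 T phi ->
  continuous (fun y => phi (clamp T y)) x.
Proof.
  intros HT Hc.
  pose proof (Hc (clamp T x) (clamp_in T x HT)) as H.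
  intros P HP. specialize (H P HP).
  destruct H as [eps Heps].
  exists eps. intros y Hy.
  apply Heps.
  - change (Rabs (clamp T y - clamp T x) < eps).
    eapply Rle_lt_trans. apply clamp_lip; auto. exact Hy.
  - apply clamp_in; auto.
Qed.

Lemma cont_f (g : R -> R) x : continuous g x -> continuous (fun v => exp (2 * g v)) x.
Proof.
  intros H. apply (continuous_comp g (fun y => exp (2 * y))); auto.
  apply continuity_pt_filterlim.
  apply (continuity_pt_comp (fun y => 2 * y) exp).
  - apply continuity_pt_mult; [apply continuity_pt_const; intros a b; reflexivity | apply continuity_pt_id].
  - apply derivable_continuous_pt. apply derivable_pt_exp.
Qed.

Theorem proposition2p4 (t u : R) (phi : R -> R) :
  0 < t -> 0 <= u -> cont_on 0 (t + u) phi ->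
  forall s, 0 <= s <= t ->
    calT t (calT (t + u) phi) s = TT t (phi t + calT (t + u) phi t) phi s.
Proof.
  intros Ht Hu Hc s Hs.
  set (T := t + u).
  assert (HT : 0 <= T) by (unfold T; lra).
  set (ph := fun y => phi (clamp T y)).
  assert (Hph : forall x, continuous ph x) by (intros; apply clamp_cont; auto).
  assert (Hphe : forall x, 0 <= x <= T -> ph x = phi x)
    by (intros; unfold ph; rewrite clamp_id; auto).
  set (f := fun v => exp (2 * ph v)).
  assert (Hf : forall x, continuous f x) by (intros; apply cont_f; auto).
  assert (Hfp : forall x, 0 < f x) by (intros; apply exp_pos).
  assert (Hex : forall a b, ex_RInt f a b)
    by (intros; apply (ex_RInt_continuous (V:=R_CompleteNormedModule)); intros; apply Hf).
  pose (Af := (fun v => RInt f 0 v) : R -> R).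
  assert (HAd : forall x, is_derive Af x (f x)).
  { intros x. apply (is_derive_RInt (V:=R_CompleteNormedModule) f Af 0).
    - apply filter_forall. intros. apply RInt_correct. auto.
    - auto. }
  assert (HAe : forall v, 0 <= v <= T -> A_ phi v = Af v).
  { intros v Hv. unfold A_, Af. apply RInt_ext.
    intros x Hx. rewrite Rmin_left in Hx by lra. rewrite Rmax_right in Hx by lra.
    unfold f. rewrite Hphe; auto. lra. }
  assert (HAmono : forall a b, a <= b -> Af b = Af a + RInt f a b).
  { intros a b Hab. unfold Af. rewrite <- (RInt_Chasles f 0 a b); auto. }
  assert (HA0 : Af 0 = 0) by (unfold Af; rewrite RInt_point; reflexivity).
  assert (HApos : forall a b, a <= b -> 0 <= RInt f a b).
  { intros. apply RInt_ge_0; auto. intros. apply Rlt_le; auto. }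
  assert (HAtpos : 0 < Af t).
  { rewrite (HAmono 0 t) by lra. rewrite HA0. rewrite Rplus_0_l.
    apply RInt_gt_0; auto. }
  assert (HAle : forall a b, a <= b -> Af a <= Af b).
  { intros. rewrite (HAmono a b) by auto. specialize (HApos a b H). lra. }
  assert (HAnn : forall a, 0 <= a -> 0 <= Af a).
  { intros. rewrite <- HA0. apply HAle; auto. }
  set (a := Af T).
  assert (Ha : 0 < a) by (unfold a; apply Rlt_le_trans with (Af t); auto; apply HAle; unfold T; lra).
  set (E := exp (2 * ph T)).
  assert (HE : 0 < E) by apply exp_pos.
  set (g := fun v => 1 + Af v / a * (E - 1)).
  assert (Hg : forall v, 0 <= v <= T -> 0 < g v).
  { intros v Hv. unfold g.
    assert (0 <= Af v / a <= 1).
    { split. apply Rdiv_le_0_compat; auto. apply HAnn; lra.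
      apply Rmult_le_reg_r with a; auto. unfold Rdiv. rewrite Rmult_assoc, Rinv_l by lra.
      rewrite Rmult_1_r, Rmult_1_l. apply HAle; lra. }
    nra. }
  assert (HpsiT : forall v, 0 <= v <= T -> calT T phi v = ph v - ln (g v)).
  { intros v Hv. unfold calT, TT. rewrite !HAe by lra.
    rewrite <- !Hphe by lra. reflexivity. }
  assert (Hexp2 : forall x y, 0 < y -> exp (2 * (x - ln y)) = exp (2 * x) / y ^ 2).
  { intros x y Hy. replace (2 * (x - ln y)) with (2 * x + - ln y + - ln y) by ring.
    rewrite !exp_plus, exp_Ropp, exp_ln by auto. field. lra. }
  assert (Hnz : forall y, 1 + y / a * (E - 1) <> 0 -> a + y * (E - 1) <> 0).
  { intros y Hy Hz. apply Hy. apply Rmult_eq_reg_l with a; [|lra].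
    rewrite Rmult_0_r, <- Hz. field. lra. }
  assert (Hgd : forall x, is_derive g x (f x / a * (E - 1))).
  { intros x. unfold g.
    apply (is_derive_ext (fun v => 1 + Af v * ((E - 1) / a))).
    1:{ intros z. change (1 + Af z * ((E - 1) / a) = 1 + Af z / a * (E - 1)). unfold Rdiv; ring. }
    replace (f x / a * (E - 1)) with (0 + f x * ((E - 1) / a)) by (unfold Rdiv; ring).
    apply (is_derive_plus (fun _ => 1) (fun v => Af v * ((E - 1) / a))).
    - apply (@is_derive_const R_AbsRing R_NormedModule).
    - apply (@is_derive_scal_l R_AbsRing R_NormedModule Af). apply HAd. }
  assert (Hgc : forall x, continuity_pt g x).
  { intros. apply continuity_pt_filterlim. apply (@ex_derive_continuous R_AbsRing R_NormedModule).
    eexists; apply Hgd. }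
  assert (Hfc : forall x, continuity_pt f x).
  { intros. apply continuity_pt_filterlim. apply Hf. }
  assert (HB : forall v, 0 <= v <= t -> A_ (calT T phi) v = Af v / g v).
  { intros v Hv.
    unfold A_.
    rewrite (RInt_ext _ (fun x => f x / g x ^ 2)).
    2:{ intros x Hx. rewrite Rmin_left in Hx by lra. rewrite Rmax_right in Hx by lra.
        rewrite HpsiT by (unfold T; lra). rewrite Hexp2 by (apply Hg; unfold T; lra).
        reflexivity. }
    assert (HI : is_RInt (fun x => f x / g x ^ 2) 0 v (minus (Af v / g v) (Af 0 / g 0))).
    { apply (is_RInt_derive (V:=R_CompleteNormedModule) (fun x => Af x / g x)).
      - intros x Hx. rewrite Rmin_left in Hx by lra. rewrite Rmax_right in Hx by lra.
        assert (0 < g x) by (apply Hg; unfold T; lra).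
        replace (f x / g x ^ 2) with ((f x * g x - Af x * (f x / a * (E - 1))) / g x ^ 2).
        + apply is_derive_div; auto. lra.
        + assert (Hgx : g x <> 0) by lra. unfold g in Hgx |- *. field. split; [lra|]. apply Hnz; auto.
      - intros x Hx. rewrite Rmin_left in Hx by lra. rewrite Rmax_right in Hx by lra.
        assert (0 < g x) by (apply Hg; unfold T; lra).
        apply continuity_pt_filterlim.
        apply continuity_pt_div; auto.
        + change (continuity_pt (fun y => g y * (g y * 1)) x).
          apply continuity_pt_mult; auto. apply continuity_pt_mult; auto.
          apply continuity_pt_const. intros ? ?; reflexivity.
        + simpl. nra. }
    apply (is_RInt_unique (V:=R_CompleteNormedModule)) in HI. rewrite HI. rewrite HA0.
    unfold minus, plus, opp; simpl. unfold Rdiv; ring. }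
  set (psi := calT T phi).
  assert (Hpsi : forall v, 0 <= v <= T -> psi v = ph v - ln (g v)) by exact HpsiT.
  assert (HB' : forall v, 0 <= v <= t -> A_ psi v = Af v / g v) by exact HB.
  unfold calT, TT.
  rewrite (HB' s Hs), (HB' t) by lra.
  rewrite !HAe by (unfold T; lra).
  rewrite !Hpsi by (unfold T; lra).
  rewrite <- !Hphe by (unfold T; lra).
  assert (Hgs : 0 < g s) by (apply Hg; unfold T; lra).
  assert (Hgt : 0 < g t) by (apply Hg; unfold T; lra).
  rewrite Hexp2 by auto.
  replace (exp (ph t + (ph t - ln (g t)))) with (exp (2 * ph t) / g t).
  2:{ replace (ph t + (ph t - ln (g t))) with (2 * ph t + - ln (g t)) by ring.
      rewrite exp_plus, exp_Ropp, exp_ln by auto. field. lra. }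
  set (E' := exp (2 * ph t)).
  assert (HE' : 0 < E') by apply exp_pos.
  assert (Hmu : 0 <= Af s / Af t <= 1).
  { split. apply Rdiv_le_0_compat; auto. apply HAnn; lra.
    apply Rmult_le_reg_r with (Af t); auto. unfold Rdiv. rewrite Rmult_assoc, Rinv_l by lra.
    rewrite Rmult_1_r, Rmult_1_l. apply HAle; lra. }
  assert (HP : 0 < 1 + Af s / Af t * (E' / g t - 1)).
  { assert (0 < E' / g t) by (apply Rdiv_lt_0_compat; auto). 
    assert (0 <= Af s / Af t * (E' / g t)) by (apply Rmult_le_pos; lra).
    replace (1 + Af s / Af t * (E' / g t - 1)) with ((1 - Af s / Af t) + Af s / Af t * (E' / g t)) by ring.
    destruct (Rlt_or_le (Af s / Af t) 1) as [Hl|Hl]; [lra|].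
    replace (Af s / Af t) with 1 by lra. lra. }
  replace (1 + Af s / g s / (Af t / g t) * (E' / g t ^ 2 - 1))
    with ((1 + Af s / Af t * (E' / g t - 1)) / g s).
  2:{ assert (Hgs' : g s <> 0) by lra. assert (Hgt' : g t <> 0) by lra.
      unfold g in Hgs', Hgt' |- *. field.
      repeat split; try lra; apply Hnz; auto. }
  unfold Rdiv at 1. rewrite ln_mult by (auto; apply Rinv_0_lt_compat; auto).
  rewrite ln_Rinv by auto. ring.
Qed.
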